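(* The functor $B\colon\mathbf{Set}^{\mathbb{O}}\to\mathbf{Set}^{\mathbb{O}}$, $BP=\mathcal{P}_f(\mathcal{L}\times\Delta P)$, is accessible (preserves filtered colimits) and covers pullbacks.
   Context: Fix a finite set $Act$ of action labels. An $Act$-labelled poset is $O=(X_O,\preccurlyeq_O,l_O)$ with $\preccurlyeq_O$ a partial order and $l_O\colon X_O\to Act$; $|O|=\{(x,l_O(x))\}$. Morphisms preserve order and labels; order-embeddings additionally reflect order. $\mathcal{O}$ is the skeletal category of finite $Act$-labelled posets and morphisms, and $\mathbb{O}$ its subcategory (same objects) with only order-embeddings as morphisms. Event allocation functor $\boldsymbol{\delta}\colon\mathbb{O}\to\mathbb{O}$: for an object $O$, $\boldsymbol{\delta}(O)$ is (the representative in $\mathbb{O}$ of) the poset obtained from $O$ by adding, for every antichain $K\subseteq|O|$ (including $K=\emptyset$) and every $a\in Act$, a fresh event $new(O,K,a)$ with label $a$ placed above exactly the elements of $K$ (then taking reflexive-transitive closure); $old(O)\colon O\to\boldsymbol{\delta}(O)$ is the embedding of $O$. For an order-embedding $\sigma\colon O\to O'$, $\boldsymbol{\delta}(\sigma)\colon\boldsymbol{\delta}(O)\to\boldsymbol{\delta}(O')$ acts as $\sigma$ on old events and sends $new(O,K,a)$ to $new(O',\sigma(K),a)$. $\mathbf{Set}^{\mathbb{O}}$ is the category of functors $\mathbb{O}\to\mathbf{Set}$ and natural transformations. $\mathcal{E}\in\mathbf{Set}^{\mathbb{O}}$ maps $O$ to $|O|$ and $\sigma$ to the renaming $x_a\mapsto\sigma(x)_a$.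 $\mathcal{P}_f\colon\mathbf{Set}^{\mathbb{O}}\to\mathbf{Set}^{\mathbb{O}}$ is postcomposition with the finite powerset functor on $\mathbf{Set}$ (direct images on maps). $\Delta\colon\mathbf{Set}^{\mathbb{O}}\to\mathbf{Set}^{\mathbb{O}}$ is $\Delta P=P\circ\boldsymbol{\delta}$. $\mathcal{L}(O)=Act\times\mathcal{P}_f(\mathcal{E}(O))$ with $\mathcal{L}(\sigma)(a,K)=(a,\sigma(K))$. Products in $\mathbf{Set}^{\mathbb{O}}$ are pointwise. In $\mathbf{Set}^{\mathbb{O}}$ images are computed pointwise, and a cover is a morphism whose image is its whole codomain (a pointwise surjective natural transformation). $B$ covers pullbacks if for every cospan $X_1\to X_3\leftarrow X_2$ with pullback $P$ (projections $\pi_1,\pi_2$), the canonical morphism $BP\to P'$ into the pullback $P'$ of $BX_1\to BX_3\leftarrow BX_2$, induced by $B\pi_1,B\pi_2$, is a cover. *)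

(* Defs.v *)
From HB Require Import structures.
From mathcomp Require Import all_boot.
From mathcomp Require Import boolp classical_sets cardinality.

Set Implicit Arguments.
Unset Strict Implicit.
Unset Printing Implicit Defensive.

Section Objects.
Variable Act : finType.

Record lposet := LPoset {
  car : finType;
  le : rel car;
  lab : car -> Act;
  le_refl : reflexive le;
  le_anti : antisymmetric le;
  le_trans : transitive le }.

Record emb (O O' : lposet) := Emb {
  emb_fun :> car O -> car O';
  emb_lab : forall x, lab (emb_fun x) = lab x;
  emb_le : forall x y, le (emb_fun x) (emb_fun y) = le x y }.

Definition id_emb (O : lposet) : emb O O :=
  @Emb O O id (fun _ => erefl) (fun _ _ => erefl).

Lemma comp_emb_lab O1 O2 O3 (g : emb O2 O3) (f : emb O1 O2) x :
  lab (g (f x)) = lab x.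
Proof. by rewrite !emb_lab. Qed.

Lemma comp_emb_le O1 O2 O3 (g : emb O2 O3) (f : emb O1 O2) x y :
  le (g (f x)) (g (f y)) = le x y.
Proof. by rewrite !emb_le. Qed.

Definition comp_emb O1 O2 O3 (g : emb O2 O3) (f : emb O1 O2) : emb O1 O3 :=
  @Emb O1 O3 (fun x => g (f x)) (comp_emb_lab g f) (comp_emb_le g f).

Lemma emb_inj O O' (f : emb O O') : injective f.
Proof.
move=> x y fxy; apply: (@le_anti O); apply/andP; split.
  by rewrite -(emb_le f) fxy le_refl.
by rewrite -(emb_le f) fxy le_refl.
Qed.

Definition antichain (O : lposet) (K : {set car O}) : bool :=
  [forall x in K, forall y in K, le x y ==> (x == y)].

Definition AC (O : lposet) := {K : {set car O} | antichain K}.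

(* carrier of δ(O): old events  inl x,  new events  inr (K, a) = new(O,K,a) *)
Definition dcar (O : lposet) : finType := (car O + (AC O * Act))%type.

(* order of δ(O): reflexive-transitive closure of
   (order of O) ∪ { (k, new(O,K,a)) | k ∈ K }, written out explicitly *)
Definition dle (O : lposet) : rel (dcar O) := fun u v =>
  match u, v with
  | inl x, inl y => le x y
  | inl x, inr (K, _) => [exists k in sval K, le x k]
  | inr _, inl _ => false
  | inr p, inr q => p == q
  end.

Definition dlab (O : lposet) (u : dcar O) : Act :=
  match u with inl x => lab x | inr (_, a) => a end.

Lemma dle_refl O : reflexive (@dle O).
Proof. by case=> [x|p] /=; rewrite ?le_refl ?eqxx. Qed.

Lemma dle_anti O : antisymmetric (@dle O).
Proof.
case=> [x|[K a]] [y|[K' b]] //=.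
- by move=> /le_anti ->.
- by rewrite andbF.
- by case/andP=> /eqP ->.
Qed.

Lemma dle_trans O : transitive (@dle O).
Proof.
move=> y x z; case: x y z => [x|p] [y|q] [z|r] //=.
- exact: le_trans.
- case: r => K a /= lxy /existsP [k /andP [kK lyk]]; apply/existsP; exists k.
  by rewrite kK (le_trans lxy lyk).
- by case: q => K a; case: r => K2 b /= h /eqP [<- _].
- by move=> /eqP -> /eqP ->.
Qed.

Definition delta (O : lposet) : lposet :=
  @LPoset (dcar O) (@dle O) (@dlab O) (@dle_refl O) (@dle_anti O) (@dle_trans O).

Lemma AC_map_proof O O' (f : emb O O') (K : AC O) : antichain (f @: sval K).
Proof.
apply/forallP=> x'; apply/implyP=> /imsetP [x xK ->].
apply/forallP=> y'; apply/implyP=> /imsetP [y yK ->].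
rewrite emb_le; apply/implyP=> lxy.
have /forallP /(_ x) := svalP K; rewrite xK /= => /forallP /(_ y).
by rewrite yK lxy /= => /eqP ->.
Qed.

Definition AC_map O O' (f : emb O O') (K : AC O) : AC O' :=
  exist _ (f @: sval K) (AC_map_proof f K).

Definition delta_fun O O' (f : emb O O') (u : dcar O) : dcar O' :=
  match u with
  | inl x => inl (f x)
  | inr (K, a) => inr (AC_map f K, a)
  end.

Lemma delta_fun_lab O O' (f : emb O O') u :
  dlab (delta_fun f u) = dlab u.
Proof. by case: u => [x|[K a]] //=; rewrite emb_lab. Qed.

Lemma delta_fun_le O O' (f : emb O O') u v :
  dle (delta_fun f u) (delta_fun f v) = dle u v.
Proof.
case: u v => [x|[K a]] [y|[K' b]] //=.
- exact: emb_le.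
- apply/existsP/existsP => [[k' /andP [/imsetP [k kK ->]]]|[k /andP [kK lxk]]].
    by rewrite emb_le => lxk; exists k; rewrite kK.
  by exists (f k); rewrite (imset_f f kK) emb_le.
- apply/eqP/eqP => [[eK ->]|[-> ->]] //; congr (_, _).
  apply: val_inj => /=; move: eK.
  exact: (imset_inj (@emb_inj _ _ f)).
Qed.

Definition delta_emb O O' (f : emb O O') : emb (delta O) (delta O') :=
  @Emb (delta O) (delta O') (delta_fun f) (delta_fun_lab f) (delta_fun_le f).

Record psh := Psh {
  F0 :> lposet -> Type;
  F1 : forall O O', emb O O' -> F0 O -> F0 O' }.

Definition is_functor (F : psh) : Prop :=
  (forall O (x : F O), F1 (id_emb O) x = x) /\
  (forall O1 O2 O3 (f : emb O1 O2) (g : emb O2 O3) (x : F O1),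
      F1 (comp_emb g f) x = F1 g (F1 f x)).

Definition nat_tr (F G : psh) := forall O, F O -> G O.

Definition is_nat (F G : psh) (al : nat_tr F G) : Prop :=
  forall O O' (f : emb O O') (x : F O), al O' (F1 f x) = F1 f (al O x).

Definition Pf (T : Type) := {A : set T | finite_set A}.

Definition Pf_map (T T' : Type) (f : T -> T') (A : Pf T) : Pf T' :=
  exist _ (image (sval A) f) (finite_image f (svalP A)).

Definition E : psh := @Psh (fun O => car O) (fun O O' f x => f x).

Definition PfF (P : psh) : psh :=
  @Psh (fun O => Pf (P O)) (fun O O' f => Pf_map (F1 f)).

Definition Lf : psh :=
  @Psh (fun O => (Act * Pf (car O))%type)
       (fun O O' f al => (al.1, Pf_map f al.2)).

Definition Delta (P : psh) : psh :=
  @Psh (fun O => P (delta O)) (fun O O' f => F1 (delta_emb f)).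

Definition prodF (P Q : psh) : psh :=
  @Psh (fun O => (P O * Q O)%type) (fun O O' f pq => (F1 f pq.1, F1 f pq.2)).

Definition B (P : psh) : psh := PfF (prodF Lf (Delta P)).

Definition Bmap (P Q : psh) (al : nat_tr P Q) : nat_tr (B P) (B Q) :=
  fun O => Pf_map (fun lp : (Act * Pf (car O)) * P (delta O) =>
                     (lp.1, al (delta O) lp.2)).

End Objects.
Arguments Bmap {Act P Q} al O.

Record cat := Cat {
  cob : Type;
  chom : cob -> cob -> Type;
  cid : forall a, chom a a;
  ccomp : forall a b c, chom b c -> chom a b -> chom a c }.

Definition is_cat (C : cat) : Prop :=
  (forall (a b : cob C) (f : chom a b), ccomp (cid b) f = f) /\
  (forall (a b : cob C) (f : chom a b), ccomp f (cid a) = f) /\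
  (forall (a b c d : cob C) (f : chom a b) (g : chom b c) (h : chom c d),
      ccomp h (ccomp g f) = ccomp (ccomp h g) f).

Definition filtered (C : cat) : Prop :=
  inhabited (cob C) /\
  (forall a b : cob C, exists c, inhabited (chom a c) /\ inhabited (chom b c)) /\
  (forall (a b : cob C) (f g : chom a b), exists c (h : chom b c), ccomp h f = ccomp h g).

Section Colimits.
Variable Act : finType.
Variable J : cat.

Record diagram := Diagram {
  D0 : cob J -> psh Act;
  D1 : forall j k, chom j k -> nat_tr (D0 j) (D0 k) }.

Arguments D1 d {j k} _.
Arguments D0 d j.

Definition is_diagram (D : diagram) : Prop :=
  (forall j, is_functor (D0 D j)) /\
  (forall j k (f : chom j k), is_nat (D1 D f)) /\
  (forall j O (x : D0 D j O), D1 D (cid j) O x = x) /\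
  (forall j k l (f : chom j k) (g : chom k l) O (x : D0 D j O),
      D1 D (ccomp g f) O x = D1 D g O (D1 D f O x)).

Definition is_cocone (D : diagram) (L : psh Act)
    (iota : forall j, nat_tr (D0 D j) L) : Prop :=
  (forall j, is_nat (iota j)) /\
  (forall j k (f : chom j k) O (x : D0 D j O), iota k O (D1 D f O x) = iota j O x).

Arguments is_cocone D L iota : clear implicits.

Definition is_colimit (D : diagram) (L : psh Act)
    (iota : forall j, nat_tr (D0 D j) L) : Prop :=
  is_cocone D L iota /\
  forall (M : psh Act) (mu : forall j, nat_tr (D0 D j) M),
    is_functor M -> is_cocone D M mu ->
    (exists u : nat_tr L M, is_nat u /\
        forall j O (x : D0 D j O), u O (iota j O x) = mu j O x) /\
    (forall u v : nat_tr L M, is_nat u -> is_nat v ->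
        (forall j O (x : D0 D j O), u O (iota j O x) = mu j O x) ->
        (forall j O (x : D0 D j O), v O (iota j O x) = mu j O x) ->
        forall O (y : L O), u O y = v O y).

Arguments is_colimit D L iota : clear implicits.

Definition Bdiag (D : diagram) : diagram :=
  @Diagram (fun j => B (D0 D j)) (fun j k f => Bmap (D1 D f)).

End Colimits.
Arguments is_cocone {Act J} D L iota.
Arguments is_colimit {Act J} D L iota.

Definition B_preserves_filtered_colimits (Act : finType) : Prop :=
  forall (J : cat) (D : diagram Act J) (L : psh Act)
         (iota : forall j, nat_tr (D0 D j) L),
    is_cat J -> filtered J -> is_diagram D -> is_functor L ->
    is_colimit D L iota ->
    is_colimit (Bdiag D) (B L) (fun j => Bmap (iota j)).

Section Pullbacks.
Variable Act : finType.

Definition is_pullback (X1 X2 X3 P : psh Act)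
    (f1 : nat_tr X1 X3) (f2 : nat_tr X2 X3)
    (p1 : nat_tr P X1) (p2 : nat_tr P X2) : Prop :=
  is_nat p1 /\ is_nat p2 /\
  (forall O (x : P O), f1 O (p1 O x) = f2 O (p2 O x)) /\
  forall (Q : psh Act) (q1 : nat_tr Q X1) (q2 : nat_tr Q X2),
    is_functor Q -> is_nat q1 -> is_nat q2 ->
    (forall O (x : Q O), f1 O (q1 O x) = f2 O (q2 O x)) ->
    (exists u : nat_tr Q P, is_nat u /\
        (forall O x, p1 O (u O x) = q1 O x) /\ (forall O x, p2 O (u O x) = q2 O x)) /\
    (forall u v : nat_tr Q P, is_nat u -> is_nat v ->
        (forall O x, p1 O (u O x) = q1 O x) -> (forall O x, p2 O (u O x) = q2 O x) ->
        (forall O x, p1 O (v O x) = q1 O x) -> (forall O x, p2 O (v O x) = q2 O x) ->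
        forall O x, u O x = v O x).

Definition is_cover (F G : psh Act) (u : nat_tr F G) : Prop :=
  forall O (y : G O), exists x : F O, u O x = y.

Definition B_covers_pullbacks : Prop :=
  forall (X1 X2 X3 : psh Act) (f1 : nat_tr X1 X3) (f2 : nat_tr X2 X3),
    is_functor X1 -> is_functor X2 -> is_functor X3 -> is_nat f1 -> is_nat f2 ->
  forall (P : psh Act) (p1 : nat_tr P X1) (p2 : nat_tr P X2),
    is_functor P -> is_pullback f1 f2 p1 p2 ->
  forall (P' : psh Act) (p1' : nat_tr P' (B X1)) (p2' : nat_tr P' (B X2)),
    is_functor P' -> is_pullback (Bmap f1) (Bmap f2) p1' p2' ->
  forall u : nat_tr (B P) P',
    (forall O x, p1' O (u O x) = Bmap p1 O x) ->
    (forall O x, p2' O (u O x) = Bmap p2 O x) ->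
    is_cover u.

End Pullbacks.

(* Main.v *)
Require Import Defs.
From mathcomp Require Import all_boot.
From mathcomp Require Import boolp classical_sets cardinality.
From Stdlib Require List.

Set Implicit Arguments.
Unset Strict Implicit.
Unset Printing Implicit Defensive.
Local Open Scope classical_set_scope.

Lemma Pf_eq T (A B : Pf T) : sval A = sval B -> A = B.
Proof.
case: A B => A hA [B hB] /= E; subst; congr exist; exact: Prop_irrelevance.
Qed.

Lemma emb_eq (Act : finType) (O O' : lposet Act) (e1 e2 : emb O O') :
  (forall x, e1 x = e2 x) -> e1 = e2.
Proof.
case: e1 e2 => f1 l1 q1 [f2 l2 q2] /= H.
have E : f1 = f2 by apply: funext.
subst; congr Emb; apply: Prop_irrelevance.
Qed.

Definition Hom (Act : finType) (O : lposet Act) : psh Act :=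
  @Psh Act (fun O' => emb O O') (fun O1 O2 h g => comp_emb h g).

Lemma Hom_functor (Act : finType) (O : lposet Act) : is_functor (Hom O).
Proof. by split=> *; apply: emb_eq. Qed.

Lemma Pf_map_comp T1 T2 T3 (f : T1 -> T2) (g : T2 -> T3) A :
  Pf_map g (Pf_map f A) = Pf_map (fun x => g (f x)) A.
Proof. by apply: Pf_eq; rewrite /= image_comp. Qed.

Lemma Pf_map_ext T1 T2 (f g : T1 -> T2) A :
  (forall x, sval A x -> f x = g x) -> Pf_map f A = Pf_map g A.
Proof. by move=> H; apply: Pf_eq => /=; apply: eq_imagel. Qed.

Section Gen.
Variable Act : finType.

Lemma Bmap_nat (P Q : psh Act) (al : nat_tr P Q) : is_nat al -> is_nat (Bmap al).
Proof.
move=> Hal O O' f S; rewrite /= /Bmap !Pf_map_comp; apply: Pf_map_ext => x _.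
by rewrite /= Hal.
Qed.

Lemma Bmap_comp (P Q R : psh Act) (al : nat_tr Q R) (be : nat_tr P Q) O S :
  Bmap al O (Bmap be O S) = Bmap (fun O x => al O (be O x)) O S.
Proof. by rewrite /Bmap Pf_map_comp. Qed.

Lemma Bmap_ext (P Q : psh Act) (al be : nat_tr P Q) O S :
  (forall x, al (delta O) x = be (delta O) x) -> Bmap al O S = Bmap be O S.
Proof. by move=> H; apply: Pf_map_ext => x _; rewrite H. Qed.

Lemma B_functor (P : psh Act) : is_functor P -> is_functor (B P).
Proof.
case=> H1 H2; split.
  move=> O S; rewrite /=.
  have -> : (fun pq : (Act * Pf (car O)) * P (delta O) =>
       ((pq.1).1, Pf_map (id_emb O) (pq.1).2, F1 (delta_emb (id_emb O)) pq.2))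
       = id.
    apply: funext => -[[a K] p] /=.
    have -> : delta_emb (id_emb O) = id_emb (delta O).
      by apply: emb_eq => -[x|[[K' hK] b]] //=; congr (inr (_, _)); apply: val_inj => /=; rewrite imset_id.
    rewrite H1; congr (_, _, _); apply: Pf_eq => /=; apply/seteqP; split=> x /=.
      by case=> y ? <-.
    by move=> ?; exists x.
  by apply: Pf_eq => /=; apply/seteqP; split=> x /=; [case=> y ? <-|exists x].
move=> O1 O2 O3 f g S; rewrite /= Pf_map_comp; apply: Pf_map_ext => -[[a K] p] _ /=.
congr (_, _, _); first by rewrite Pf_map_comp.
have -> : delta_emb (comp_emb g f) = comp_emb (delta_emb g) (delta_emb f).
  apply: emb_eq => -[x|[[K' hK] b]] //=; congr (inr (_, _)); apply: val_inj => /=.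
  by rewrite -imset_comp.
by rewrite H2.
Qed.

End Gen.
Section PB.
Variable Act : finType.

Lemma pb_exists (X1 X2 X3 P : psh Act) (f1 : nat_tr X1 X3) (f2 : nat_tr X2 X3)
  (p1 : nat_tr P X1) (p2 : nat_tr P X2) :
  is_functor X1 -> is_functor X2 -> is_nat f1 -> is_nat f2 ->
  is_pullback f1 f2 p1 p2 ->
  forall O x1 x2, f1 O x1 = f2 O x2 -> exists p, p1 O p = x1 /\ p2 O p = x2.
Proof.
move=> [F1i F1c] [F2i F2c] Nf1 Nf2 [_ [_ [_ U]]] O x1 x2 E.
pose q1 : nat_tr (Hom O) X1 := fun O' (g : emb O O') => F1 g x1.
pose q2 : nat_tr (Hom O) X2 := fun O' (g : emb O O') => F1 g x2.
have nq1 : is_nat q1 by move=> O1 O2 h g; rewrite /q1 /= F1c.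
have nq2 : is_nat q2 by move=> O1 O2 h g; rewrite /q2 /= F2c.
have cq : forall O' (g : Hom O O'), f1 O' (q1 O' g) = f2 O' (q2 O' g).
  by move=> O' g; rewrite /q1 /q2 Nf1 Nf2 E.
have [[u [_ [H1 H2]]] _] := U _ q1 q2 (Hom_functor O) nq1 nq2 cq.
exists (u O (id_emb O)); rewrite H1 H2 /q1 /q2 F1i F2i; done.
Qed.

Lemma pb_inj (X1 X2 X3 P : psh Act) (f1 : nat_tr X1 X3) (f2 : nat_tr X2 X3)
  (p1 : nat_tr P X1) (p2 : nat_tr P X2) :
  is_functor P -> is_pullback f1 f2 p1 p2 ->
  forall O a b, p1 O a = p1 O b -> p2 O a = p2 O b -> a = b.
Proof.
move=> [Pi Pc] [N1 [N2 [C U]]] O a b Ea Eb.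
pose q1 : nat_tr (Hom O) X1 := fun O' (g : emb O O') => p1 O' (F1 g a).
pose q2 : nat_tr (Hom O) X2 := fun O' (g : emb O O') => p2 O' (F1 g a).
have nq1 : is_nat q1 by move=> O1 O2 h g; rewrite /q1 /= Pc N1.
have nq2 : is_nat q2 by move=> O1 O2 h g; rewrite /q2 /= Pc N2.
have cq : forall O' (g : Hom O O'), f1 O' (q1 O' g) = f2 O' (q2 O' g).
  by move=> O' g; rewrite /q1 /q2 C.
have [_ V] := U _ q1 q2 (Hom_functor O) nq1 nq2 cq.
pose u : nat_tr (Hom O) P := fun O' (g : emb O O') => F1 g a.
pose v : nat_tr (Hom O) P := fun O' (g : emb O O') => F1 g b.
have nu : is_nat u by move=> O1 O2 h g; rewrite /u /= Pc.
have nv : is_nat v by move=> O1 O2 h g; rewrite /v /= Pc.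
have := V u v nu nv (fun _ _ => erefl) (fun _ _ => erefl) _ _ O (id_emb O).
rewrite /u /v /= !Pi; apply.
- by move=> O' g; rewrite /v /q1 N1 -Ea -N1.
- by move=> O' g; rewrite /v /q2 N2 -Eb -N2.
Qed.

Lemma covers : B_covers_pullbacks Act.
Proof.
move=> X1 X2 X3 f1 f2 FX1 FX2 FX3 Nf1 Nf2 P p1 p2 FP pbP P' p1' p2' FP' pbP' u
  Hu1 Hu2 O y.
set S1 := p1' O y; set S2 := p2' O y.
have E : Bmap f1 O S1 = Bmap f2 O S2 by case: pbP' => _ [_ [C _]]; apply: C.
pose T := [set t : (Act * Pf (car O)) * P (delta O) |
             sval S1 (t.1, p1 (delta O) t.2) /\ sval S2 (t.1, p2 (delta O) t.2)].
pose h := fun t : (Act * Pf (car O)) * P (delta O) =>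
            ((t.1, p1 (delta O) t.2), (t.1, p2 (delta O) t.2)).
have Tfin : finite_set T.
  have -> : T = h @^-1` (sval S1 `*` sval S2) by [].
  apply: finite_preimage; last by apply: finite_setX; [exact: svalP|exact: svalP].
  move=> [l a] [l' b] _ _ [] -> Ea _ Eb.
  by rewrite (pb_inj FP pbP Ea Eb).
pose x : B P O := exist _ T Tfin.
have ES1 : Bmap p1 O x = S1.
  apply: Pf_eq => /=; apply/seteqP; split => [_ [t [Ht _] <-] //|[l x1] Hs].
  have : sval (Bmap f1 O S1) (l, f1 _ x1) by exists (l, x1).
  rewrite E => -[[l' x2] Hs2 [El Ex]]; rewrite /= in El Ex; subst l'.
  have [p [Hp1 Hp2]] := pb_exists FX1 FX2 Nf1 Nf2 pbP (esym Ex).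
  by subst; exists (l, p).
have ES2 : Bmap p2 O x = S2.
  apply: Pf_eq => /=; apply/seteqP; split => [_ [t [_ Ht] <-] //|[l x2] Hs].
  have : sval (Bmap f2 O S2) (l, f2 _ x2) by exists (l, x2).
  rewrite -E => -[[l' x1] Hs1 [El Ex]]; rewrite /= in El Ex; subst l'.
  have [p [Hp1 Hp2]] := pb_exists FX1 FX2 Nf1 Nf2 pbP Ex.
  by subst; exists (l, p).
exists x; apply: (pb_inj FP' pbP').
  by rewrite Hu1 ES1.
by rewrite Hu2 ES2.
Qed.

End PB.
Lemma sigP_eq T (P : T -> Prop) (a b : {x | P x}) : sval a = sval b -> a = b.
Proof. case: a b => a ha [b hb] /= E; subst; congr exist; exact: Prop_irrelevance. Qed.

Lemma list_finite T (s : seq T) : finite_set [set t | List.In t s].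
Proof.
elim: s => [|x s IH].
  by have -> : [set t | List.In t [::]] = @set0 T by apply/seteqP; split=> t.
have -> : [set t | List.In t (x :: s)] = [set x] `|` [set t | List.In t s].
  by apply/seteqP; split=> t /= [->|H]; by [left|right].
by rewrite finite_setU; split.
Qed.

Lemma finite_list T (A : set T) : finite_set A ->
  exists s : seq T, forall x, A x <-> List.In x s.
Proof.
move=> /(@finite_seqP {classic T}) [s ->]; exists s => x /=.
elim: s => [|y s IH] //=; rewrite in_cons; split.
  by case/orP => [/eqP ->|/IH]; [left|right].
by case=> [->|/IH ->]; rewrite ?eqxx ?orbT.
Qed.

Section Colim.
Variable Act : finType.
Variable J : Defs.cat.
Variable D : diagram Act J.
Variable L : psh Act.
Variable iota : forall j, nat_tr (D0 D j) L.
Arguments iota : clear implicits.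
Hypothesis HJ : is_cat J.
Hypothesis HF : filtered J.
Hypothesis HD : is_diagram D.
Hypothesis HL : is_functor L.
Hypothesis HC : is_colimit D L iota.

Notation Df f O x := (@D1 Act J D _ _ f O x).
Notation Dn f := (@D1 Act J D _ _ f).

Lemma Dcomp j k l (f : chom j k) (g : chom k l) O x :
  Df (ccomp g f) O x = Df g O (Df f O x).
Proof. by case: HD => _ [_ [_ H]]; apply: H. Qed.

Lemma Did j O x : Df (Defs.cid j) O x = x.
Proof. by case: HD => _ [_ [H _]]; apply: H. Qed.

Lemma Dnat j k (f : chom j k) : is_nat (Dn f).
Proof. by case: HD => _ [H _]; apply: H. Qed.

Lemma Dfun j : is_functor (D0 D j).
Proof. by case: HD => H _; apply: H. Qed.

Lemma iota_nat j : is_nat (iota j).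
Proof. by case: HC => [[H _] _]. Qed.

Lemma iota_co j k (f : chom j k) O x : iota k O (Df f O x) = iota j O x.
Proof. by case: HC => [[_ H] _]; apply: H. Qed.

Definition M1F (O : lposet Act) := {y : L O | exists j x, iota j O x = y}.

Lemma M1_pf O O' (h : emb O O') (y : M1F O) :
  exists j x, iota j O' x = F1 h (sval y).
Proof.
case: y => y /= [j [x E]]; exists j, (F1 h x); rewrite -E; exact: iota_nat.
Qed.

Definition M1 : psh Act :=
  @Psh Act M1F (fun O O' h y => exist _ (F1 h (sval y)) (M1_pf h y)).

Lemma M1_functor : is_functor M1.
Proof.
case: HL => H1 H2; split=> *; apply: sigP_eq => /=; by rewrite ?H1 ?H2.
Qed.

Definition mu1 j : nat_tr (D0 D j) M1 :=
  fun O x => exist _ (iota j O x) (ex_intro _ j (ex_intro _ x erefl)).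

Lemma P1 O (y : L O) : exists j x, iota j O x = y.
Proof.
have cM : is_cocone D M1 mu1.
  split.
    by move=> j O1 O2 f x; apply: sigP_eq => /=; apply: iota_nat.
  by move=> j k f O1 x; apply: sigP_eq => /=; apply: iota_co.
have [[u [nu Hu]] _] := HC.2 M1 mu1 M1_functor cM.
pose w : nat_tr L L := fun O y => sval (u O y).
have nw : is_nat w by move=> O1 O2 f z; rewrite /w nu.
have nid : is_nat (fun O (y : L O) => y) by [].
have Hw : forall j O (x : D0 D j O), w O (iota j O x) = iota j O x.
  by move=> j O1 x; rewrite /w Hu.
have := (HC.2 L iota HL HC.1).2 w (fun O y => y) nw nid Hw (fun _ _ _ => erefl) O y.
move=> E; have := svalP (u O y); rewrite -/(w O y) E; exact.
Qed.

Definition ST O := {j : cob J & D0 D j O}.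

Definition R O (a b : ST O) : Prop :=
  exists l (f : chom (projT1 a) l) (g : chom (projT1 b) l),
    Df f O (projT2 a) = Df g O (projT2 b).

Lemma R_refl O a : R (O:=O) a a.
Proof. by exists (projT1 a), (Defs.cid _), (Defs.cid _). Qed.

Lemma R_sym O a b : R (O:=O) a b -> R b a.
Proof. by case=> l [f [g E]]; exists l, g, f. Qed.

Lemma R_trans O a b c : R (O:=O) a b -> R b c -> R a c.
Proof.
case=> l1 [f1 [g1 E1]] [l2 [f2 [g2 E2]]].
case: HF => _ [H2 H3].
have [m [[h1] [h2]]] := H2 l1 l2.
have [n [e He]] := H3 _ _ (ccomp h1 g1) (ccomp h2 f2).
exists n, (ccomp e (ccomp h1 f1)), (ccomp e (ccomp h2 g2)).
have F1' : Df (ccomp e (ccomp h1 f1)) O (projT2 a) = Df (ccomp e (ccomp h1 g1)) O (projT2 b)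
  by rewrite !Dcomp E1.
have F2' : Df (ccomp e (ccomp h2 f2)) O (projT2 b) = Df (ccomp e (ccomp h2 g2)) O (projT2 c)
  by rewrite !Dcomp E2.
by rewrite F1' He F2'.
Qed.

Definition maph O O' (h : emb O O') (a : ST O) : ST O' :=
  existT _ (projT1 a) (F1 h (projT2 a)).

Lemma R_map O O' (h : emb O O') a b : R a b -> R (maph h a) (maph h b).
Proof.
case=> l [f [g E]]; exists l, f, g => /=.
by rewrite (Dnat f) (Dnat g) E.
Qed.

Definition cls O (a : ST O) : set (ST O) := fun b => R b a.

Lemma cls_eq O (a b : ST O) : cls a = cls b <-> R a b.
Proof.
split.
  by move=> E; have : cls a a := R_refl a; rewrite E.
move=> Hab; apply/funext => c; apply/propext; rewrite /cls; split => H.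
  exact: R_trans H Hab.
exact: R_trans H (R_sym Hab).
Qed.

Definition M2F O := {C : set (ST O) | exists a, C = cls a}.

Definition pick O (C : M2F O) : ST O := sval (boolp.cid (svalP C)).

Lemma pickP O (C : M2F O) : sval C = cls (pick C).
Proof. exact: (svalP (boolp.cid (svalP C))). Qed.

Definition M2 : psh Act :=
  @Psh Act M2F (fun O O' h C => exist _ (cls (maph h (pick C))) (ex_intro _ _ erefl)).

Lemma maph_id O (a : ST O) : maph (id_emb O) a = a.
Proof. by case: a => j x; rewrite /maph /=; case: (Dfun j) => -> _. Qed.

Lemma maph_comp O1 O2 O3 (f : emb O1 O2) (g : emb O2 O3) (a : ST O1) :
  maph (comp_emb g f) a = maph g (maph f a).
Proof. by case: a => j x; rewrite /maph /=; case: (Dfun j) => _ ->. Qed.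

Lemma M2_functor : is_functor M2.
Proof.
split.
  by move=> O C; apply: sigP_eq => /=; rewrite maph_id pickP.
move=> O1 O2 O3 f g C; apply: sigP_eq => /=; apply/cls_eq.
rewrite maph_comp; apply: R_sym; apply: R_map; apply/cls_eq.
by rewrite -pickP.
Qed.

Definition mu2 j : nat_tr (D0 D j) M2 :=
  fun O x => exist _ (cls (existT _ j x : ST O)) (ex_intro _ _ erefl).
Arguments mu2 : clear implicits.

Lemma mu2_cocone : is_cocone D M2 mu2.
Proof.
split.
  move=> j O O' f x; apply: sigP_eq => /=; apply/cls_eq.
  have -> : (existT _ j (F1 f x) : ST O') = maph f (existT _ j x) by [].
  apply: R_map; apply/cls_eq; rewrite -pickP //.
move=> j k f O x; apply: sigP_eq => /=; apply/cls_eq.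
by exists k, (Defs.cid k), f => /=; rewrite Did.
Qed.

Lemma P2 O j k (x : D0 D j O) (y : D0 D k O) :
  iota j O x = iota k O y ->
  exists l (f : chom j l) (g : chom k l), Df f O x = Df g O y.
Proof.
move=> E.
have [[u [nu Hu]] _] := HC.2 M2 mu2 M2_functor mu2_cocone.
have : mu2 j O x = mu2 k O y by rewrite -!Hu E.
move=> /(congr1 sval) /= /cls_eq [l [f [g H]]]; by exists l, f, g.
Qed.

Lemma lift_list (Lb : Type) O (s : seq (Lb * L O)) :
  exists j (s' : seq (Lb * D0 D j O)), map (fun t => (t.1, iota j O t.2)) s' = s.
Proof.
elim: s => [|[a y] s [j1 [s1 E1]]].
  by case: HF => [[j] _]; exists j, [::].
have [j2 [x2 E2]] := P1 y.
case: HF => _ [H2 _]; have [c [[h1] [h2]]] := H2 j1 j2.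
exists c, ((a, Df h2 O x2) :: map (fun t => (t.1, Df h1 O t.2)) s1).
rewrite /= iota_co E2 -E1 -map_comp; congr cons; apply: eq_map => t /=.
by rewrite iota_co.
Qed.

Lemma K1 O (S : B L O) : exists j (S' : B (D0 D j) O), Bmap (iota j) O S' = S.
Proof.
have [s Hs] := finite_list (svalP S).
have [j [s' E]] := lift_list s.
exists j, (exist _ [set t | List.In t s'] (list_finite s')).
apply: Pf_eq => /=; apply/seteqP; split.
  move=> _ [t Ht <-]; apply/Hs; rewrite -E.
  exact: (List.in_map (fun t => (t.1, iota j (delta O) t.2))).
move=> t /Hs; rewrite -E => /List.in_map_iff [t' [<- Ht']]; by exists t'.
Qed.

Definition stable (j k : cob J) (Q : forall l, chom j l -> chom k l -> Prop) :=
  forall l f g m (h : chom l m), Q l f g -> Q m (ccomp h f) (ccomp h g).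
Definition ev (j k : cob J) (Q : forall l, chom j l -> chom k l -> Prop) :=
  exists l f g, Q l f g.

Lemma ev_and j k (Q1 Q2 : forall l, chom j l -> chom k l -> Prop) :
  stable Q1 -> stable Q2 -> ev Q1 -> ev Q2 ->
  ev (fun l f g => Q1 l f g /\ Q2 l f g).
Proof.
move=> S1 S2 [l1 [f1 [g1 q1]]] [l2 [f2 [g2 q2]]].
case: HF => _ [H2 H3].
have [c [[h1] [h2]]] := H2 l1 l2.
have [d [e He]] := H3 _ _ (ccomp h1 f1) (ccomp h2 f2).
have [d' [e' He']] := H3 _ _ (ccomp e (ccomp h1 g1)) (ccomp e (ccomp h2 g2)).
have A := HJ.2.2.
have Ef : ccomp (ccomp e' (ccomp e h1)) f1 = ccomp (ccomp e' (ccomp e h2)) f2.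
  by have := congr1 (ccomp e') He; rewrite !A => ->.
have Eg : ccomp (ccomp e' (ccomp e h1)) g1 = ccomp (ccomp e' (ccomp e h2)) g2.
  by move: He'; rewrite !A => ->.
exists d', (ccomp (ccomp e' (ccomp e h1)) f1), (ccomp (ccomp e' (ccomp e h1)) g1).
split; first exact: S1.
rewrite Ef Eg; exact: S2.
Qed.

Lemma ev_list j k T (P : T -> forall l, chom j l -> chom k l -> Prop) (s : seq T) :
  (forall t, stable (P t)) -> (forall t, List.In t s -> ev (P t)) ->
  ev (fun l f g => forall t, List.In t s -> P t l f g).
Proof.
move=> SP; elim: s => [|t s IH] H.
  case: HF => _ [H2 _]; have [c [[f] [g]]] := H2 j k.
  by exists c, f, g => t [].
have := ev_and (SP t) _ (H t (or_introl erefl)) (IH (fun t' Ht' => H t' (or_intror Ht'))).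
case.
  by move=> l f g m h Hl t' Ht'; apply: SP; apply: Hl.
move=> l [f [g [Q1 Q2]]]; exists l, f, g => t' [<-|Ht'] //.
exact: Q2.
Qed.

Lemma stable_all j k T (P : T -> forall l, chom j l -> chom k l -> Prop) (s : seq T) :
  (forall t, stable (P t)) -> stable (fun l f g => forall t, List.In t s -> P t l f g).
Proof. by move=> SP l f g m h Hl t Ht; apply: SP; apply: Hl. Qed.

Lemma K2 O j k (S1 : B (D0 D j) O) (S2 : B (D0 D k) O) :
  Bmap (iota j) O S1 = Bmap (iota k) O S2 ->
  exists l (f : chom j l) (g : chom k l), Bmap (Dn f) O S1 = Bmap (Dn g) O S2.
Proof.
move=> E.
pose Q1 := fun (t : (Act * Pf (car O)) * D0 D j (delta O)) l (f : chom j l) (g : chom k l) =>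
  exists t2, sval S2 t2 /\ t2.1 = t.1 /\ Df f (delta O) t.2 = Df g (delta O) t2.2.
pose Q2 := fun (t : (Act * Pf (car O)) * D0 D k (delta O)) l (f : chom j l) (g : chom k l) =>
  exists t1, sval S1 t1 /\ t1.1 = t.1 /\ Df f (delta O) t1.2 = Df g (delta O) t.2.
have SQ1 : forall t, stable (Q1 t).
  move=> t l f g m h [t2 [H1 [H2 H3]]]; exists t2; split => //; split => //.
  by rewrite !Dcomp H3.
have SQ2 : forall t, stable (Q2 t).
  move=> t l f g m h [t1 [H1 [H2 H3]]]; exists t1; split => //; split => //.
  by rewrite !Dcomp H3.
have [s1 Hs1] := finite_list (svalP S1).
have [s2 Hs2] := finite_list (svalP S2).
have ev1 : ev (fun l f g => forall t, List.In t s1 -> Q1 t l f g).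
  apply: ev_list => // t /Hs1 Ht.
  have : sval (Bmap (iota j) O S1) (t.1, iota j (delta O) t.2) by exists t.
  rewrite E => -[t2 Ht2 [El Ei]].
  have [l [f [g Hfg]]] := P2 (esym Ei).
  by exists l, f, g, t2.
have ev2 : ev (fun l f g => forall t, List.In t s2 -> Q2 t l f g).
  apply: ev_list => // t /Hs2 Ht.
  have : sval (Bmap (iota k) O S2) (t.1, iota k (delta O) t.2) by exists t.
  rewrite -E => -[t1 Ht1 [El Ei]].
  have [l [f [g Hfg]]] := P2 Ei.
  by exists l, f, g, t1.
have [l [f [g [A1 A2]]]] := ev_and (stable_all SQ1) (stable_all SQ2) ev1 ev2.
exists l, f, g; apply: Pf_eq => /=; apply/seteqP; split.
  move=> _ [t /Hs1 Ht <-]; have [t2 [H2s [El Ee]]] := A1 t Ht.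
  by exists t2 => //=; rewrite El Ee.
move=> _ [t /Hs2 Ht <-]; have [t1 [H1s [El Ee]]] := A2 t Ht.
by exists t1 => //=; rewrite El Ee.
Qed.

Lemma preserves : is_colimit (Bdiag D) (B L) (fun j => Bmap (iota j)).
Proof.
split.
  split.
    by move=> j; apply: Bmap_nat; exact: iota_nat.
  move=> j k f O x /=; rewrite Bmap_comp; apply: Bmap_ext => y; exact: iota_co.
move=> M mu FM [Nmu Cmu].
have wd : forall O j k S1 S2, Bmap (iota j) O S1 = Bmap (iota k) O S2 ->
    mu j O S1 = mu k O S2.
  move=> O j k S1 S2 /K2 [l [f [g E]]].
  rewrite -(Cmu _ _ f) -(Cmu _ _ g); exact: (congr1 (mu l O) E).
have K1s : forall O (S : B L O), {j : cob J & {S' : B (D0 D j) O | Bmap (iota j) O S' = S}}.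
  move=> O S; case: (boolp.cid (K1 S)) => j H; exists j; exact: boolp.cid H.
pose u : nat_tr (B L) M := fun O S => mu (projT1 (K1s O S)) O (sval (projT2 (K1s O S))).
have uP : forall j0 O S', u O (Bmap (iota j0) O S') = mu j0 O S'.
  move=> j0 O S'; rewrite /u; case: (K1s _ _) => j1 [S1 E1] /=; exact: wd.
split.
  exists u; split => //.
  move=> O O' h S; have [j [S' <-]] := K1 S.
  by rewrite -(Bmap_nat (@iota_nat j)) !uP Nmu.
move=> v w _ _ Hv Hw O S; have [j [S' <-]] := K1 S; by rewrite Hv Hw.
Qed.

End Colim.

Theorem proposition7 (Act : finType) :
  B_preserves_filtered_colimits Act /\ B_covers_pullbacks Act.
Proof.
split; last exact: covers.
by move=> J D L iota HJ HF HD HL HC; apply: preserves.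
Qed.
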